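(* For every fluent sentence $\alpha$ of ESG: $\models_{\mathrm{ESG}}\alpha$ iff $\models_{\text{t-ESG}}\alpha$.
   Context: The logic t-ESG. Sorts object, action, clock, time; standard names $\mathcal N_O,\mathcal N_A,\mathcal N_C$ (countably infinite) and time names $\mathbb Q_{\ge0}$; fluent and rigid function and predicate symbols (action- and clock-valued functions rigid); distinguished fluent predicates $\mathit{Poss}$, $\mathit{reset}$, $g$. Primitive terms/formulas: symbols applied to standard names. Situation formulas include $P(\vec t)$, $t_1=t_2$, clock comparisons $c\bowtie r$, $r\bowtie r'$ ($r,r'\in\mathbb Q_{\ge0}$), closed under $\wedge,\neg,\forall$ and the modal operators $\square,[\delta],[\![\delta]\!]$. A formula is static if it contains no $\square$, $[\cdot]$, $[\![\cdot]\!]$; it is fluent if it is static, contains no clock terms and does not mention $g$ or $\mathit{Poss}$. Timed traces are sequences $t_1p_1t_2p_2\cdots$ of non-decreasing reals $t_i\ge0$ alternating with action names. A t-ESG world maps (primitive term, finite timed trace) to a standard name of the right sort, (primitive formula, finite timed trace) to $\{0,1\}$ and (clock name, finite timed trace) to $\mathbb R_{\ge0}$, where rigid symbols are trace-independent, distinct primitive action terms (and clock terms) are mapped to distinct names, clocks start at $0$, advance with time and are set to $0$ by actions $p$ with $w[\mathit{reset}(c),z\cdot p]=1$. Denotation: $|n|^z_w=n$, $|f(t_1,\dots,t_k)|^z_w=w[f(|t_1|^z_w,\dots,|t_k|^z_w),z]$. For fluent sentences truth is: $w,z\models F(\vec t)$ iff $w[F(|\vec t|^z_w),z]=1$; $w,z\models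 t_1=t_2$ iff the denotations are identical; $r\bowtie r'$ iff true in $\mathbb Q$; Boolean connectives as usual; $w,z\models\forall x\alpha$ iff $w,z\models\alpha^x_n$ for all names $n$ of the sort of $x$. $w\models\alpha$ means $w,\langle\rangle\models\alpha$; $\models_{\text{t-ESG}}\alpha$ means $w\models\alpha$ for every t-ESG world. The logic ESG: its language consists of t-ESG formulas mentioning only object and action terms (no clock terms, no $g$, no $\mathit{reset}$, only unbounded until). ESG traces are sequences of action names; an ESG world maps (primitive object/action term, finite ESG trace) to standard names and (primitive formula, finite ESG trace) to $\{0,1\}$, with rigid symbols trace-independent and unique names for actions; truth of fluent sentences is defined by the same clauses; $\models_{\mathrm{ESG}}\alpha$ means $w,\langle\rangle\models\alpha$ for every ESG world $w$. *)

(* Defs.v *)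
From Stdlib Require Import Reals List Bool.
Import ListNotations.
Set Implicit Arguments.
Open Scope R_scope.

Inductive sort := SObj | SAct.

(** Standard names: N_O and N_A, both countably infinite (indexed by nat). *)
Inductive name := NmO (n : nat) | NmA (n : nat).

Definition sort_of_name (n : name) : sort :=
  match n with NmO _ => SObj | NmA _ => SAct end.

Definition sort_eqb (s s' : sort) : bool :=
  match s, s' with SObj, SObj | SAct, SAct => true | _, _ => false end.

Record signature := {
  fsym : Type;
  fargs : fsym -> list sort;
  fres : fsym -> sort;
  frigid : fsym -> bool;
  act_fun_rigid : forall f, fres f = SAct -> frigid f = true;
  psym : Type;
  pargs : psym -> list sort;
  prigid : psym -> bool
}.
Arguments fargs {s} _.
Arguments fres {s} _.
Arguments frigid {s} _.
Arguments pargs {s} _.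
Arguments prigid {s} _.

Section Syntax.
Variable S : signature.

Inductive term :=
| TVar (x : nat) (s : sort)
| TName (n : name)
| TApp (f : fsym S) (ts : list term).

(** Fluent formulas (no modalities, no clocks, no Poss, no g). *)
Inductive formula :=
| FPred (P : psym S) (ts : list term)
| FEq (t1 t2 : term)
| FNot (a : formula)
| FAnd (a b : formula)
| FAll (x : nat) (s : sort) (a : formula).

Inductive has_sort : term -> sort -> Prop :=
| HS_var x s : has_sort (TVar x s) s
| HS_name n : has_sort (TName n) (sort_of_name n)
| HS_app f ts : Forall2 has_sort ts (fargs f) -> has_sort (TApp f ts) (fres f).

Inductive term_closed (B : list (nat * sort)) : term -> Prop :=
| TC_var x s : In (x, s) B -> term_closed B (TVar x s)
| TC_name n : term_closed B (TName n)
| TC_app f ts : Forall (term_closed B) ts -> term_closed B (TApp f ts).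

Inductive wf_formula : list (nat * sort) -> formula -> Prop :=
| WF_pred B P ts : Forall2 has_sort ts (pargs P) -> Forall (term_closed B) ts ->
    wf_formula B (FPred P ts)
| WF_eq B t1 t2 s : has_sort t1 s -> has_sort t2 s ->
    term_closed B t1 -> term_closed B t2 -> wf_formula B (FEq t1 t2)
| WF_not B a : wf_formula B a -> wf_formula B (FNot a)
| WF_and B a b : wf_formula B a -> wf_formula B b -> wf_formula B (FAnd a b)
| WF_all B x s a : wf_formula ((x, s) :: B) a -> wf_formula B (FAll x s a).

Definition fluent_sentence (a : formula) : Prop := wf_formula [] a.

(** Semantics.  [rho] is a pending substitution of standard names for
    variables (innermost binder first): [sat .. rho a] is the truth of
    [a] with the substitution [rho] applied, so that
    [forall x a] is true iff [a^x_n] is true for all names n of the sort of x. *)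
Fixpoint lookup (rho : list (nat * sort * name)) (x : nat) (s : sort) : name :=
  match rho with
  | [] => match s with SObj => NmO 0 | SAct => NmA 0 end
  | (y, s', n) :: rho' =>
      if Nat.eqb x y && sort_eqb s s' then n else lookup rho' x s
  end.

Variable Tr : Type.
Variable Fv : fsym S -> list name -> Tr -> name.
Variable Pv : psym S -> list name -> Tr -> bool.

Fixpoint den (rho : list (nat * sort * name)) (z : Tr) (t : term) : name :=
  match t with
  | TVar x s => lookup rho x s
  | TName n => n
  | TApp f ts => Fv f (map (den rho z) ts) z
  end.

Fixpoint sat (rho : list (nat * sort * name)) (z : Tr) (a : formula) : Prop :=
  match a with
  | FPred P ts => Pv P (map (den rho z) ts) z = true
  | FEq t1 t2 => den rho z t1 = den rho z t2
  | FNot b => ~ sat rho z b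
  | FAnd b c => sat rho z b /\ sat rho z c
  | FAll x s b => forall n : name, sort_of_name n = s -> sat ((x, s, n) :: rho) z b
  end.

End Syntax.

Arguments TVar {S}.
Arguments TName {S}.

(** ESG worlds: traces are finite sequences of action names (indices of N_A). *)
Definition atrace := list nat.

Record esg_world (S : signature) := {
  ew_f : fsym S -> list name -> atrace -> name;
  ew_p : psym S -> list name -> atrace -> bool;
  ew_sort : forall f ns z, map sort_of_name ns = fargs f ->
      sort_of_name (ew_f f ns z) = fres f;
  ew_frigid : forall f ns z z', frigid f = true -> ew_f f ns z = ew_f f ns z';
  ew_prigid : forall P ns z z', prigid P = true -> ew_p P ns z = ew_p P ns z';
  ew_una : forall f g ns ms z, fres f = SAct -> fres g = SAct ->
      map sort_of_name ns = fargs f -> map sort_of_name ms = fargs g ->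
      ew_f f ns z = ew_f g ms z -> f = g /\ ns = ms
}.

Definition esg_valid (S : signature) (a : formula S) : Prop :=
  forall w : esg_world S, sat (ew_f w) (ew_p w) [] [] a.

(** Timed traces: finite sequences (t1,p1)(t2,p2)... of non-decreasing real
    times t_i >= 0 paired with action names. *)
Definition ttrace := list (R * nat).

Fixpoint ttrace_ok_from (t0 : R) (z : ttrace) : Prop :=
  match z with
  | [] => True
  | (t, _) :: z' => t0 <= t /\ ttrace_ok_from t z'
  end.

Definition ttrace_ok (z : ttrace) : Prop := ttrace_ok_from 0 z.

(** time of the last action of a timed trace (0 for the empty trace) *)
Definition last_time (z : ttrace) : R := fst (last z (0, 0%nat)).

(** t-ESG worlds (restricted to the symbols of the signature, plus the clock
    machinery: clock names N_C = nat, the fluent predicate reset(c) and the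
    clock values). *)
Record tesg_world (S : signature) := {
  tw_f : fsym S -> list name -> ttrace -> name;
  tw_p : psym S -> list name -> ttrace -> bool;
  tw_reset : nat -> ttrace -> bool;
  tw_clock : nat -> ttrace -> R;
  tw_sort : forall f ns z, map sort_of_name ns = fargs f ->
      sort_of_name (tw_f f ns z) = fres f;
  tw_frigid : forall f ns z z', ttrace_ok z -> ttrace_ok z' ->
      frigid f = true -> tw_f f ns z = tw_f f ns z';
  tw_prigid : forall P ns z z', ttrace_ok z -> ttrace_ok z' ->
      prigid P = true -> tw_p P ns z = tw_p P ns z';
  tw_una : forall f g ns ms z, ttrace_ok z -> fres f = SAct -> fres g = SAct ->
      map sort_of_name ns = fargs f -> map sort_of_name ms = fargs g ->
      tw_f f ns z = tw_f g ms z -> f = g /\ ns = ms;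
  tw_clock0 : forall c, tw_clock c [] = 0;
  tw_clock_step : forall c z t p, ttrace_ok (z ++ [(t, p)]) ->
      tw_clock c (z ++ [(t, p)]) =
        if tw_reset c (z ++ [(t, p)]) then 0
        else tw_clock c z + (t - last_time z)
}.

Definition tesg_valid (S : signature) (a : formula S) : Prop :=
  forall w : tesg_world S, sat (tw_f w) (tw_p w) [] [] a.

(* Main.v *)
Require Import Defs.
From Stdlib Require Import Reals List Bool Lra.
Import ListNotations.
Open Scope R_scope.

Lemma den_ext (S : signature) (T1 T2 : Type)
  (F1 : fsym S -> list name -> T1 -> name) (F2 : fsym S -> list name -> T2 -> name)
  (z1 : T1) (z2 : T2) (H : forall f ns, F1 f ns z1 = F2 f ns z2) rho :
  forall t, den F1 rho z1 t = den F2 rho z2 t.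
Proof.
  fix IH 1. intros [x s|n|f ts]; simpl; auto.
  rewrite H. f_equal. revert ts. fix IHl 1. intros [|t ts]; simpl.
  - reflexivity.
  - rewrite (IH t), (IHl ts). reflexivity.
Qed.

Lemma sat_ext (S : signature) (T1 T2 : Type)
  (F1 : fsym S -> list name -> T1 -> name) (F2 : fsym S -> list name -> T2 -> name)
  (P1 : psym S -> list name -> T1 -> bool) (P2 : psym S -> list name -> T2 -> bool)
  (z1 : T1) (z2 : T2) (H : forall f ns, F1 f ns z1 = F2 f ns z2)
  (HP : forall p ns, P1 p ns z1 = P2 p ns z2) (a : formula S) :
  forall rho, sat F1 P1 rho z1 a <-> sat F2 P2 rho z2 a.
Proof.
  induction a as [P ts|t1 t2|b IHb|b IHb c IHc|x s b IHb]; intros rho; simpl.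
  - rewrite HP. rewrite (map_ext _ _ (den_ext _ _ _ F1 F2 z1 z2 H rho)). tauto.
  - rewrite !(den_ext _ _ _ F1 F2 z1 z2 H rho). tauto.
  - rewrite IHb. tauto.
  - rewrite IHb, IHc. tauto.
  - split; intros K n Hn; apply IHb; auto.
Qed.

Theorem mainTheorem4 (S : signature) (a : formula S) :
  fluent_sentence a -> (esg_valid a <-> tesg_valid a).
Proof.
  intros _. split.
  - intros V w.
    set (w' := {|
      ew_f := fun f ns (_ : atrace) => tw_f w f ns [];
      ew_p := fun p ns (_ : atrace) => tw_p w p ns [];
      ew_sort := fun f ns _ H => tw_sort w f ns [] H;
      ew_frigid := fun f ns _ _ _ => eq_refl;
      ew_prigid := fun p ns _ _ _ => eq_refl;
      ew_una := fun f g ns ms _ Hf Hg Hn Hm E => tw_una w f g ns ms [] I Hf Hg Hn Hm E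
    |} : esg_world S).
    generalize (V w'). apply sat_ext; reflexivity.
  - intros V w.
    assert (Hc0 : forall c : nat, (fun (_ : nat) (z : ttrace) => last_time z) c [] = 0).
    { intros; reflexivity. }
    assert (Hcs : forall c z t p, ttrace_ok (z ++ [(t, p)]) ->
      (fun (_ : nat) (z : ttrace) => last_time z) c (z ++ [(t, p)]) =
        if (fun (_ : nat) (_ : ttrace) => false) c (z ++ [(t, p)]) then 0
        else (fun (_ : nat) (z : ttrace) => last_time z) c z + (t - last_time z)).
    { intros c z t p _. simpl. unfold last_time. rewrite last_last. simpl. ring. }
    set (w' := {|
      tw_f := fun f ns (_ : ttrace) => ew_f w f ns [];
      tw_p := fun p ns (_ : ttrace) => ew_p w p ns [];
      tw_reset := fun _ _ => false;
      tw_clock := fun _ z => last_time z;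
      tw_sort := fun f ns _ H => ew_sort w f ns [] H;
      tw_frigid := fun f ns _ _ _ _ _ => eq_refl;
      tw_prigid := fun p ns _ _ _ _ _ => eq_refl;
      tw_una := fun f g ns ms _ _ Hf Hg Hn Hm E => ew_una w f g ns ms [] Hf Hg Hn Hm E;
      tw_clock0 := Hc0;
      tw_clock_step := Hcs
    |} : tesg_world S).
    generalize (V w'). apply sat_ext; reflexivity.
Qed.
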